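(* Let $\alpha$ generate an infinite cyclic discrete group $A=\langle\alpha\rangle$ and let $M$ be a polycontractable LC $A$-module. Then the map $x\mapsto \alpha x-x$ is an automorphism of the topological $A$-module $M$ (a bijective continuous homomorphism with continuous inverse).
   Context: An LC $A$-module is an LCA group with a continuous action of $A$ by topological automorphisms. Contractable: some element of $A$ acts as a contracting automorphism ($a^nx\to0$ as $n\to+\infty$ for all $x$). Polycontractable: a finite topological direct sum of closed contractable submodules; for $A=\langle\alpha\rangle$ this means a direct sum of a closed submodule contracted by $\alpha$ and one contracted by $\alpha^{-1}$. *)

(* Defs.v *)
From HB Require Import structures.
From mathcomp Require Import all_boot all_order all_algebra.
From mathcomp Require Import all_classical all_reals all_analysis.
Set Implicit Arguments. Unset Strict Implicit. Unset Printing Implicit Defensive.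
Import Order.TTheory GRing.Theory Num.Theory.
Local Open Scope classical_set_scope.
Local Open Scope ring_scope.

Definition LCA_group (M : topologicalZmodType) : Prop :=
  hausdorff_space M /\ locally_compact [set: M].

(** An action of the infinite cyclic group <alpha> on M by topological
    automorphisms is given by the topological automorphism [a] (image of
    alpha) with its inverse [ainv] (image of alpha^-1). *)
Definition topological_automorphism (M : topologicalZmodType) (a ainv : M -> M) : Prop :=
  {morph a : x y / x + y} /\ cancel a ainv /\ cancel ainv a /\
  continuous a /\ continuous ainv.

Definition is_submodule (M : topologicalZmodType) (a ainv : M -> M) (S : set M) : Prop :=
  S 0 /\ (forall x y, S x -> S y -> S (x - y)) /\
  (forall x, S x -> S (a x)) /\ (forall x, S x -> S (ainv x)).

Definition contracted_by (M : topologicalZmodType) (b : M -> M) (S : set M) : Prop :=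
  forall x, S x -> (fun n : nat => iter n b x) @ \oo --> (0 : M).

(** M is the topological direct sum of M1 and M2: the addition map
    M1 x M2 -> M is a bijection with continuous inverse x |-> (p1 x, p2 x). *)
Definition topological_direct_sum (M : topologicalZmodType) (M1 M2 : set M) : Prop :=
  M1 `&` M2 `<=` [set 0] /\
  exists p1 p2 : M -> M, continuous p1 /\ continuous p2 /\
    forall x, M1 (p1 x) /\ M2 (p2 x) /\ p1 x + p2 x = x.

Definition polycontractable_cyclic (M : topologicalZmodType) (a ainv : M -> M) : Prop :=
  exists M1 M2 : set M,
    closed M1 /\ closed M2 /\ is_submodule a ainv M1 /\ is_submodule a ainv M2 /\
    contracted_by a M1 /\ contracted_by ainv M2 /\ topological_direct_sum M1 M2.

(* Main.v *)
Require Import Defs.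
From HB Require Import structures.
From mathcomp Require Import all_boot all_order all_algebra.
From mathcomp Require Import all_classical all_reals all_analysis.
Import Order.TTheory GRing.Theory Num.Theory.
Local Open Scope classical_set_scope.
Local Open Scope ring_scope.

Section TopGroup.
Variable M : topologicalZmodType.

Lemma contD (f g : M -> M) x : {for x, continuous f} -> {for x, continuous g} ->
  {for x, continuous (fun y => f y + g y)}.
Proof.
move=> cf cg.
apply: (@continuous_comp _ _ _ (fun y => (f y, g y)) (fun p : M * M => p.1 + p.2)).
  exact: cvg_pair.
exact: add_continuous.
Qed.

Lemma contN (f : M -> M) x : {for x, continuous f} ->
  {for x, continuous (fun y => - f y)}.
Proof.
move=> cf.
apply: (@continuous_comp _ _ _ f (fun p : M => - p)) => //.
exact: opp_continuous.
Qed.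

Lemma contB (f g : M -> M) x : {for x, continuous f} -> {for x, continuous g} ->
  {for x, continuous (fun y => f y - g y)}.
Proof. by move=> cf cg; apply: contD => //; exact: contN. Qed.

Lemma cont_cst (c : M) x : {for x, continuous (fun _ : M => c)}.
Proof. exact: cvg_cst. Qed.

Lemma cont_id x : {for x, continuous (fun y : M => y)}.
Proof. exact: cvg_id. Qed.

Lemma nbhs0_add (U : set M) : nbhs 0 U ->
  exists2 W, nbhs 0 W & forall x y, W x -> W y -> U (x + y).
Proof.
move=> U0.
have : nbhs ((0 : M), (0 : M)) [set p : M * M | U (p.1 + p.2)].
  by apply: (@add_continuous M (0, 0)); rewrite /= addr0.
case=> -[A B] /= [nA nB] sub.
exists (A `&` B); first exact: filterI.
by move=> x y [Ax _] [_ By]; exact: (sub (x, y)).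
Qed.

Lemma nbhs0_opp (U : set M) : nbhs 0 U -> nbhs 0 [set x | U (- x)].
Proof.
move=> U0; have := @opp_continuous M 0 U.
by rewrite /= oppr0 => /(_ U0).
Qed.

Lemma nbhs0_sub (U : set M) : nbhs 0 U ->
  exists2 W, nbhs 0 W & forall x y, W x -> W y -> U (x - y).
Proof.
move=> /nbhs0_add[W W0 HW].
exists (W `&` [set x | W (- x)]); first by apply: filterI => //; exact: nbhs0_opp.
by move=> x y [Wx _] [_ Wy]; exact: HW.
Qed.

Lemma nbhs_trans0 (x : M) (A : set M) : nbhs x A -> nbhs 0 [set y | A (x + y)].
Proof.
move=> Ax.
have := @contD (fun _ => x) (fun y => y) 0 (cont_cst x 0) (cont_id 0) A.
by rewrite /= addr0 => /(_ Ax).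
Qed.

Lemma nbhs_trans0' (x : M) (A : set M) : nbhs 0 [set y | A (x + y)] -> nbhs x A.
Proof.
move=> A0.
have := @contB (fun y => y) (fun _ => x) x (cont_id x) (cont_cst x x) [set y | A (x + y)].
rewrite /= subrr => /(_ A0) H'.
have H'' : nbhs x ((fun y => y - x) @^-1` [set y | A (x + y)]) := H'.
by apply: filterS H'' => y /=; rewrite addrC subrK.
Qed.

Lemma nbhs0_closed (U : set M) : nbhs 0 U ->
  exists2 W, nbhs 0 W & closure W `<=` U.
Proof.
move=> /nbhs0_sub[W W0 HW]; exists W => // z clz.
have : nbhs z [set y | W (y - z)].
  by apply: nbhs_trans0'; apply: filterS W0 => y /=; rewrite addrC addKr.
move=> /clz[y [Wy Wyz]].
by have := HW _ _ Wy Wyz; rewrite opprB addrC subrK.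
Qed.

Lemma nbhs_closed (x : M) (U : set M) : nbhs x U ->
  exists2 W, nbhs x W & closure W `<=` U.
Proof.
move=> /nbhs_trans0/nbhs0_closed[W W0 HW].
exists [set y | W (y - x)].
  by apply: nbhs_trans0'; apply: filterS W0 => y /=; rewrite addrC addKr.
move=> z clz.
suff : closure W (z - x) by move/HW => /=; rewrite addrC subrK.
move=> B nB.
have : nbhs z [set y | B (y - x)].
  apply: nbhs_trans0'.
  have := nbhs_trans0 _ _ nB; apply: filterS => y /=.
  by rewrite addrAC.
by move=> /clz[y [Wy By]]; exists (y - x).
Qed.

Lemma hausdorff0 (d : M) : hausdorff_space M ->
  (forall U, nbhs 0 U -> U d) -> d = 0.
Proof.
move=> hM H; apply/esym/hM => A B nA nB.
by exists d; split; [exact: H|exact: nbhs_singleton].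
Qed.

Lemma additive_cont (phi : M -> M) : {morph phi : x y / x + y} ->
  (forall U, nbhs 0 U -> nbhs 0 (phi @^-1` U)) -> continuous phi.
Proof.
move=> phiD H x B nB.
have phi0 : phi 0 = 0.
  by apply: (@addrI _ (phi 0)); rewrite -phiD !addr0.
apply: nbhs_trans0'.
have := H _ (nbhs_trans0 _ _ nB); apply: filterS => y /=.
have -> : phi (x + y) = phi x + phi y by rewrite phiD.
by [].
Qed.

Lemma decr_le (K : nat -> set M) : (forall n, K n.+1 `<=` K n) ->
  forall n m, (n <= m)%N -> K m `<=` K n.
Proof.
move=> dK n m /subnK <-; elim: (m - n)%N => [|k IH] //=.
by rewrite addSn; apply: subset_trans IH; exact: dK.
Qed.

Lemma nested_compact (C : set M) (K : nat -> set M) : compact C ->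
  (forall n, closed (K n)) -> K 0%N `<=` C -> (forall n, K n.+1 `<=` K n) ->
  (forall n, K n !=set0) -> exists z, forall n, K n z.
Proof.
move=> cC clK K0C dK neK.
have FF : Filter (filter_from setT K).
  apply: filter_from_filter; first by exists 0%N.
  move=> i j _ _; exists (maxn i j) => // x Kx; split.
    exact: (@decr_le K dK i _ (leq_maxl i j) x Kx).
  exact: (@decr_le K dK j _ (leq_maxr i j) x Kx).
have PF : ProperFilter (filter_from setT K) by apply: filter_from_proper.
have FC : filter_from setT K C by exists 0%N.
have [z [_ clz]] := cC _ PF FC.
exists z => n; apply: clK => B nB.
by apply: clz => //; exists n.
Qed.

Lemma baire (S : set M) (E : nat -> set M) (B0 : set M) :
  nbhs 0 B0 -> compact (closure B0) -> closed S -> S 0 ->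
  (forall n, closed (E n)) -> (forall x, S x -> exists n, E n x) ->
  exists n x0 B, [/\ S x0, nbhs x0 B & forall y, S y -> B y -> E n y].
Proof.
move=> nB0 cB0 clS S0 clE covE.
apply: contrapT => NH.
have step : forall n x (B : set M), S x -> nbhs x B ->
    exists y, [/\ S y, B° y & ~ E n y].
  move=> n x B Sx nB; apply: contrapT => NY; apply: NH.
  exists n, x, B°; split => //; first exact: nbhs_interior.
  move=> y Sy By; apply: contrapT => NE; apply: NY.
  by exists y; split.
have step2 : forall np : nat * (M * set M), exists q : M * set M,
    S np.2.1 -> nbhs np.2.1 np.2.2 ->
    [/\ S q.1, nbhs q.1 q.2, closure q.2 `<=` np.2.2 &
      forall y, closure q.2 y -> ~ E np.1 y].
  case=> n [x B] /=.
  have [Sx|NSx] := pselect (S x); last by exists (0, B).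
  have [nB|NnB] := pselect (nbhs x B); last by exists (0, B).
  have [y [Sy By NEy]] := step n x B Sx nB.
  have nO : nbhs y (B° `&` ~` E n).
    apply: open_nbhs_nbhs; split; last by split.
    by apply: openI; [exact: open_interior| rewrite -closedC setCK].
  have [W nW clW] := nbhs_closed _ _ nO.
  exists (y, W) => _ _; split => //.
    by move=> z /clW [/interior_subset].
  by move=> z /clW [].
have [f Hf] := choice step2.
pose g := fix g n := if n is k.+1 then f (k, g k) else (0 : M, B0).
have Hg : forall n, S (g n).1 /\ nbhs (g n).1 (g n).2.
  elim=> [|n [IH1 IH2]] //=.
  by have [] := Hf (n, g n) IH1 IH2.
have Hg2 : forall n, closure (g n.+1).2 `<=` (g n).2 /\
    forall y, closure (g n.+1).2 y -> ~ E n y.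
  move=> n; have [IH1 IH2] := Hg n.
  by have [] := Hf (n, g n) IH1 IH2.
pose K n := S `&` closure (g n.+1).2.
have [z Kz] : exists z, forall n, K n z.
  apply: (@nested_compact (closure B0)) => //.
  - by move=> n; apply: closedI => //; exact: closed_closure.
  - move=> y [_ /(proj1 (Hg2 0%N))] /=; exact: subset_closure.
  - move=> n y [Sy /(proj1 (Hg2 n.+1))] Hy; split => //.
    exact: subset_closure.
  - move=> n; exists (g n.+1).1; split; first by case: (Hg n.+1).
    by apply: subset_closure; apply: nbhs_singleton; case: (Hg n.+1).
have [n Enz] := covE z (proj1 (Kz 0%N)).
by apply: (proj2 (Hg2 n) z (proj2 (Kz n))).
Qed.

End TopGroup.
Arguments nbhs0_sub {M U}. Arguments nbhs0_add {M U}. Arguments nbhs0_closed {M U}.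
Arguments nbhs_closed {M x U}. Arguments nbhs_trans0 {M x A}. Arguments nbhs_trans0' {M x A}.
Arguments baire {M S E B0}. Arguments nested_compact {M C K}. Arguments nbhs0_opp {M U}.

Lemma cvg_oo (T : topologicalType) (u : nat -> T) (U : set T) (x : T) :
  u @ \oo --> x -> nbhs x U -> exists N, forall n, (N <= n)%N -> U (u n).
Proof. move=> H nU; have := H U nU; case=> N _ HN; exists N => n Hn; exact: HN. Qed.

Section Iter.
Variable M : topologicalZmodType.
Variable b : M -> M.
Hypothesis bD : {morph b : x y / x + y}.

Lemma b0 : b 0 = 0.
Proof. by apply: (@addrI _ (b 0)); rewrite -bD !addr0. Qed.

Lemma bB x y : b (x - y) = b x - b y.
Proof. by apply: (@addIr _ (b y)); rewrite -bD !subrK. Qed.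

Lemma iterD' n x y : iter n b (x + y) = iter n b x + iter n b y.
Proof. by elim: n => //= n ->; rewrite bD. Qed.

Lemma iterB' n x y : iter n b (x - y) = iter n b x - iter n b y.
Proof. by elim: n => //= n ->; rewrite bB. Qed.

Lemma iter0' n : iter n b 0 = 0.
Proof. by elim: n => //= n ->; rewrite b0. Qed.

Lemma iter_cont n : continuous b -> continuous (iter n b).
Proof.
move=> cb; elim: n => [|n IH] x; first exact: cvg_id.
exact: (@continuous_comp _ _ _ (iter n b) b x (IH x) (cb _)).
Qed.

End Iter.
Arguments b0 {M b}. Arguments bB {M b}. Arguments iterD' {M b}. Arguments iterB' {M b}.
Arguments iter0' {M b}. Arguments iter_cont {M b}.

Section Contr.
Variable M : topologicalZmodType.
Hypothesis hM : hausdorff_space M.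
Variable B0 : set M.
Hypotheses (nB0 : nbhs 0 B0) (cB0 : compact (closure B0)).
Variables b binv : M -> M.
Hypotheses (bD : {morph b : x y / x + y}) (bK : cancel b binv)
  (bKV : cancel binv b) (cb : continuous b).
Variable S : set M.
Hypotheses (clS : closed S) (S0 : S 0)
  (SB : forall x y, S x -> S y -> S (x - y))
  (Sb : forall x, S x -> S (b x)) (Sbinv : forall x, S x -> S (binv x))
  (contr : contracted_by b S).

Lemma SN x : S x -> S (- x).
Proof. by move=> Sx; rewrite -sub0r; exact: SB. Qed.

Lemma SD x y : S x -> S y -> S (x + y).
Proof. by move=> Sx Sy; rewrite -[y]opprK; apply: SB => //; exact: SN. Qed.

Lemma Siter n x : S x -> S (iter n b x).
Proof. by move=> Sx; elim: n => //= n IH; exact: Sb. Qed.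

Lemma contrN x U : S x -> nbhs 0 U -> exists N, forall n, (N <= n)%N -> U (iter n b x).
Proof. by move=> Sx nU; apply: cvg_oo nU; exact: contr. Qed.

Arguments SN {x}. Arguments SD {x y}. Arguments contrN {x U}.

Lemma unif_contr (K : set M) : compact K -> K `<=` S ->
  forall U, nbhs 0 U -> exists N, forall n x, (N <= n)%N -> K x -> U (iter n b x).
Proof.
move=> cK KS U nU.
have [W0 nW0 HW0] := nbhs0_sub nU.
have [W1 nW1 clW1] := nbhs0_closed nW0.
pose E N := S `&` \bigcap_(n in [set n | (N <= n)%N]) (iter n b @^-1` closure W1).
have clE : forall N, closed (E N).
  move=> N; apply: closedI => //; apply: closed_bigI => n _.
  apply: preimage_closed; last exact: closed_closure.
  by move=> x _; exact: iter_cont.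
have covE : forall x, S x -> exists N, E N x.
  move=> x Sx; have [N HN] := contrN Sx nW1.
  exists N; split => // n /= Nn; apply: subset_closure; exact: HN.
have [n0 [x0 [B [Sx0 nB HB]]]] := baire nB0 cB0 clS S0 clE covE.
have nO : nbhs 0 [set y | B (x0 + y)] by exact: nbhs_trans0.
have HO : forall y n, S y -> B (x0 + y) -> (n0 <= n)%N -> U (iter n b y).
  move=> y n Sy By le.
  have [_ /(_ n le) /clW1 W0a] := HB _ (SD Sx0 Sy) By.
  have [_ /(_ n le) /clW1 W0b] := HB _ Sx0 (@nbhs_singleton _ _ _ nB).
  have := HW0 _ _ W0a W0b.
  by rewrite -(iterB' bD) addrC addKr.
pose O := [set y | B (x0 + y)]°.
have nOi : nbhs 0 O by exact: nbhs_interior.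
pose Kc m := K `&` \bigcap_(j in [set j | (j <= m)%N]) (iter j b @^-1` ~` O).
have [m Hm] : exists m, forall x, K x -> exists j, (j <= m)%N /\ O (iter j b x).
  apply: contrapT => NH.
  have neK : forall m, Kc m !=set0.
    move=> m; apply: contrapT => Ne; apply: NH; exists m => x Kx.
    apply: contrapT => Nj; apply: Ne; exists x; split => // j /= jm Oj.
    by apply: Nj; exists j.
  have clK : closed K by exact: compact_closed.
  have [z Kz] : exists z, forall m, Kc m z.
    apply: (@nested_compact _ K) => //.
    - move=> m; apply: closedI => //; apply: closed_bigI => j _.
      apply: preimage_closed; first by move=> x _; exact: iter_cont.
      by rewrite closedC; exact: open_interior.
    - by move=> x [].
    - move=> m x [Kx Hx]; split => // j /= jm; apply: Hx => /=.
      exact: leqW.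
  have [j Hj] := contrN (KS _ (proj1 (Kz 0%N))) nOi.
  by have [_ /(_ j (leqnn j))] := Kz j; apply; exact: Hj.
exists (m + n0)%N => n x le Kx.
have [j [jm Oj]] := Hm x Kx.
have -> : n = ((n - j) + j)%N by rewrite subnK // (leq_trans jm) // (leq_trans _ le) // leq_addr.
rewrite iterD; apply: HO.
- by apply: Siter; exact: KS.
- exact: (@interior_subset _ [set y | B (x0 + y)] _ Oj).
- rewrite leq_subRL; last exact: (leq_trans jm (leq_trans (leq_addr _ _) le)).
  by apply: leq_trans le; rewrite leq_add2r.
Qed.


Lemma binvD : {morph binv : x y / x + y}.
Proof. by move=> x y; apply: (can_inj bK); rewrite bD !bKV. Qed.

Lemma iter_comm (f g : M -> M) : (forall x, f (g x) = g (f x)) ->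
  forall n x, iter n f (g x) = g (iter n f x).
Proof. by move=> H; elim=> //= n IH x; rewrite IH H. Qed.

Lemma fix0 y : S y -> b y = y -> y = 0.
Proof.
move=> Sy by_; apply: hausdorff0 => // U nU.
have [N HN] := contrN Sy nU.
have : iter N b y = y by elim: N {HN} => //= N ->.
by move=> <-; exact: HN.
Qed.

Fixpoint Qf (n : nat) (y : M) : M := if n is n'.+1 then Qf n' y + iter n' b y else 0.

Lemma QfE n y : b (Qf n y) - Qf n y = iter n b y - y.
Proof.
elim: n => [|n IH] /=; first by rewrite (b0 bD) !subrr.
rewrite bD opprD addrACA IH.
by rewrite addrC addrA subrK.
Qed.

Lemma QfS n y : S y -> S (Qf n y).
Proof. by move=> Sy; elim: n => //= n IH; apply: SD => //; exact: Siter. Qed.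

Lemma Qf_cont n : continuous (Qf n).
Proof.
elim: n => [|n IH] x /=; first exact: cvg_cst.
by apply: contD; [exact: IH | exact: (iter_cont n cb)].
Qed.

Lemma Qf0 n : Qf n 0 = 0.
Proof. by elim: n => //= n ->; rewrite add0r (iter0' bD). Qed.

Fixpoint sq (T : M -> M) (x : M) (j : nat) : M :=
  if j is j'.+1 then sq T x j' + iter j T x else x.

Lemma iter_mul k j x : iter j (iter k b) x = iter (j * k) b x.
Proof. by elim: j => //= j ->; rewrite mulSn iterD. Qed.

Section Fix.
Variables (L D : set M) (k : nat).
Hypotheses (cL : compact L) (LS : L `<=` S) (L0 : L 0) (nD : nbhs 0 D)
  (inv : forall x l, S x -> D x -> L l -> L (x + iter k b l))
  (Tc : forall U, nbhs 0 U -> exists N, forall n l, (N <= n)%N -> L l -> U (iter n (iter k b) l)).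

Let T := iter k b.

Lemma TD : {morph T : x y / x + y}.
Proof. by move=> x y; rewrite /T iterD'. Qed.

Lemma iterTD n : {morph iter n T : x y / x + y}.
Proof. by move=> x y; rewrite iterD' //; exact: TD. Qed.

Lemma sqS x j : sq T x j.+1 = x + T (sq T x j).
Proof.
elim: j => [|j IH]; first by [].
have -> : sq T x j.+2 = sq T x j.+1 + iter j.+2 T x by [].
rewrite {1}IH -addrA; congr (_ + _).
have -> : sq T x j.+1 = sq T x j + iter j.+1 T x by [].
by rewrite TD.
Qed.

Lemma fixpt x : S x -> D x -> exists z, L z /\ z = x + T z.
Proof.
move=> Sx Dx.
pose A j := [set sq T x j + iter j.+1 T l | l in L].
have Tcont : continuous T by exact: iter_cont.
have AC : forall j, compact (A j).
  move=> j; apply: continuous_compact => //; apply: continuous_subspaceT.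
  by move=> y; apply: contD; [exact: cvg_cst| exact: iter_cont].
have Adec : forall j, A j.+1 `<=` A j.
  move=> j _ [l Ll <-]; exists (x + T l); first exact: inv.
  by rewrite iterTD /= addrA -iterSr.
have A0 : A 0%N `<=` L by move=> _ [l Ll <-]; exact: inv.
have [z Az] : exists z, forall j, A j z.
  apply: (nested_compact cL) => //.
  - by move=> j; apply: compact_closed.
  - by move=> j; exists (sq T x j + iter j.+1 T 0); exists 0.
have Lz : L z by exact: A0 (Az 0%N).
have Az' : forall j, A j (x + T z).
  case=> [|j]; first by exists z.
  have [l Ll <-] := Az j.
  by exists l => //; rewrite sqS TD addrA -iterS.
exists z; split => //.
apply/eqP; rewrite -subr_eq0; apply/eqP; apply: hausdorff0 => // U nU.
have [W nW HW] := nbhs0_sub nU.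
have [N HN] := Tc _ nW.
have [l1 L1 E1] := Az N; have [l2 L2 E2] := Az' N.
rewrite -E2 -{1}E1 opprD addrACA subrr add0r; apply: HW; apply: HN => //; exact: leqW.
Qed.

Lemma exist_sol x : S x -> exists y, S y /\ b y - y = x.
Proof.
move=> Sx.
have [m Hm] := contrN Sx nD.
have [z [Lz Ez]] := fixpt _ (Siter m _ Sx) (Hm m (leqnn m)).
pose w := iter m binv z.
have binvS : forall n y, S y -> S (iter n binv y).
  by move=> n y Sy; elim: n => //= n IH; exact: Sbinv.
have Sw : S w by apply: binvS; exact: LS.
have Ew : w = x + T w.
  have c1 : forall y, T (binv y) = binv (T y).
    by apply: iter_comm => y; rewrite bKV bK.
  rewrite /w {1}Ez iterD'; last exact: binvD.
  have -> : iter m binv (iter m b x) = x.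
    have ib : forall n y, iter n binv (iter n b y) = y.
      by elim=> [|n IH] y //; rewrite iterSr [iter n.+1 b y]iterS bK IH.
    exact: ib.
  by congr (_ + _); apply: (iter_comm binv T) => y; rewrite c1.
exists (Qf k (- w)); split; first by apply: QfS; exact: SN.
rewrite QfE -/T.
have TN : T (- w) = - T w by rewrite /T -[- w]sub0r (iterB' bD) (iter0' bD) sub0r.
by rewrite TN opprK addrC {1}Ew addrK.
Qed.

Lemma sq_cont j : continuous (sq T ^~ j).
Proof.
elim: j => [|j IH] x /=; first exact: cvg_id.
exact: (@contD _ (sq T ^~ j) (iter j.+1 T) x (IH x) (iter_cont j.+1 (iter_cont k cb) x)).
Qed.

Lemma sq0 j : sq T 0 j = 0.
Proof. elim: j => // j IH; have -> : sq T 0 j.+1 = sq T 0 j + iter j.+1 T 0 by []. by rewrite IH add0r (iter0' TD). Qed.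

Lemma fix_iter x z : z = x + T z -> forall j, z = sq T x j + iter j.+1 T z.
Proof.
move=> Ez; elim=> [|j IH] //=.
rewrite {1}IH {1}Ez iterTD addrA.
by rewrite -iterSr.
Qed.

Lemma core_fix : exists h : M -> M,
  (forall x, S x -> S (h x) /\ b (h x) - h x = x) /\
  (forall U, nbhs 0 U -> exists2 V, nbhs 0 V & forall x, S x -> V x -> U (h x)).
Proof.
have [h Hh] : {h : M -> M & forall x, S x -> S (h x) /\ b (h x) - h x = x}.
  apply: (@choice M M (fun x y => S x -> S y /\ b y - y = x)) => x.
  have [Sx|NSx] := pselect (S x); last by exists 0.
  by have [y Hy] := exist_sol x Sx; exists y.
exists h; split => // U nU.
pose Q' := fun y => Qf k (- y).
have nU2 : nbhs 0 (Q' @^-1` U).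
  have cQ : {for 0, continuous Q'}.
    apply: (@continuous_comp _ _ _ (fun y : M => - y) (Qf k)).
      exact: opp_continuous.
    exact: Qf_cont.
  by apply: cQ; rewrite /Q' oppr0 Qf0.
have [U1 nU1 HU1] := nbhs0_add nU2.
have [J HJ] := Tc _ nU1.
exists (D `&` (sq T ^~ J @^-1` U1)).
  apply: filterI => //; apply: (sq_cont J 0); by rewrite sq0.
move=> x Sx [Dx sU].
have [z [Lz Ez]] := fixpt x Sx Dx.
have U2z : U (Q' z) by rewrite (fix_iter _ _ Ez J); apply: HU1 => //; apply: HJ => //; exact: leqnSn.
suff -> : h x = Q' z by [].
have [Shx Ehx] := Hh x Sx.
have SQ : S (Q' z) by apply: QfS; apply: SN; exact: LS.
have EQ : b (Q' z) - Q' z = x.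
  rewrite /Q' QfE -/T.
  have TN : T (- z) = - T z by rewrite /T -[- z]sub0r (iterB' bD) (iter0' bD) sub0r.
  by rewrite TN opprK addrC {1}Ez addrK.
apply/eqP; rewrite -subr_eq0; apply/eqP; apply: fix0; first exact: SB.
apply/eqP; rewrite -subr_eq0 (bB bD).
have E4 : forall a c u v : M, a - c - (u - v) = (a - u) - (c - v).
  by move=> a c u v; rewrite !opprD !opprK addrACA.
by rewrite E4 Ehx EQ subrr.
Qed.

End Fix.

Lemma core : exists h : M -> M,
  (forall x, S x -> S (h x) /\ b (h x) - h x = x) /\
  (forall U, nbhs 0 U -> exists2 V, nbhs 0 V & forall x, S x -> V x -> U (h x)).
Proof.
pose L := S `&` closure B0.
have cL : compact L.
  apply: (subclosed_compact _ cB0) => //; last exact: subIsetr.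
  by apply: closedI => //; exact: closed_closure.
have LS : L `<=` S by exact: subIsetl.
have L0 : L 0 by split => //; apply: subset_closure; exact: nbhs_singleton.
have [D nD HD] := nbhs0_add nB0.
have [N HN] := unif_contr L cL LS D nD.
apply: (@core_fix L D N.+1 cL LS L0 nD).
  move=> x l Sx Dx Ll; split; first by apply: SD => //; apply: Siter; exact: LS.
  apply: subset_closure; apply: HD => //; apply: HN => //; exact: leqnSn.
move=> U nU; have [N' HN'] := unif_contr L cL LS U nU.
exists N' => n l le Ll; rewrite iter_mul; apply: HN' => //.
exact: (leq_trans le (leq_pmulr n (ltn0Sn N))).
Qed.

End Contr.
Arguments SD {M S}. Arguments core {M} hM {B0} nB0 cB0 {b binv} bD bK bKV cb {S} clS S0 SB Sb Sbinv contr.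
Arguments fix0 {M} hM {b S} contr {y}. Arguments binvD {M b binv}.

Section Final.
Variable M : topologicalZmodType.
Hypothesis hM : hausdorff_space M.

Lemma hD (S : set M) (b h : M -> M) : {morph b : x y / x + y} ->
  S 0 -> (forall x y, S x -> S y -> S (x - y)) ->
  (forall y, S y -> b y = y -> y = 0) ->
  (forall x, S x -> S (h x) /\ b (h x) - h x = x) ->
  forall u v, S u -> S v -> h (u + v) = h u + h v.
Proof.
move=> bD S0 SB fx Hh u v Su Sv.
pose phi := fun y => b y - y.
have phiD : {morph phi : x y / x + y}.
  by move=> x y; rewrite /phi bD opprD addrACA.
have Suv : S (u + v) by exact: (SD S0 SB).
have [Sh1 E1] := Hh _ Suv; have [Sh2 E2] := Hh _ Su; have [Sh3 E3] := Hh _ Sv.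
apply/eqP; rewrite -subr_eq0; apply/eqP; apply: fx.
  by apply: (SB) => //; exact: (SD S0 SB).
apply/eqP; rewrite -subr_eq0; apply/eqP.
have -> : b (h (u + v) - (h u + h v)) - (h (u + v) - (h u + h v)) =
   phi (h (u + v) - (h u + h v)) by [].
by rewrite (bB phiD) phiD /phi E1 E2 E3 subrr.
Qed.

Lemma Gcont (S : set M) (h q : M -> M) :
  {morph q : x y / x + y} -> continuous q -> (forall x, S (q x)) ->
  (forall u v, S u -> S v -> h (u + v) = h u + h v) ->
  (forall U, nbhs 0 U -> exists2 V, nbhs 0 V & forall x, S x -> V x -> U (h x)) ->
  continuous (fun x => h (q x)).
Proof.
move=> qD cq Sq hD' hc; apply: additive_cont.
  by move=> x y /=; rewrite qD hD'.
move=> U nU; have [V nV HV] := hc U nU.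
have q0 : q 0 = 0 by exact: (b0 qD).
have : nbhs 0 (q @^-1` V) by apply: cq; rewrite q0.
by apply: filterS => y /= Vy; apply: HV.
Qed.

End Final.
Arguments Gcont {M S h q}. Arguments hD {M S b h}.

Theorem mainTheorem5 (M : topologicalZmodType) (a ainv : M -> M) :
  LCA_group M ->
  topological_automorphism a ainv ->
  polycontractable_cyclic a ainv ->
  let f := fun x : M => a x - x in
  {morph f : x y / x + y} /\ (forall x, f (a x) = a (f x)) /\ continuous f /\
  exists g : M -> M, cancel f g /\ cancel g f /\ continuous g.
Proof.
move=> [hM lc] [aD [aK [aKV [ca cai]]]].
move=> [M1 [M2 [cl1 [cl2 [[S10 [S1B [S1a S1i]]] [[S20 [S2B [S2a S2i]]] [c1 [c2 [inter [p1 [p2 [cp1 [cp2 Hp]]]]]]]]]]]]].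
move=> f.
have [B0 nB0 [cB0 clB0]] : exists2 B0 : set M, nbhs 0 B0 & compact B0 /\ closed B0.
  by have := lc 0 I; rewrite withinET.
have cB0' : compact (closure B0) by rewrite -(proj1 (closure_id B0) clB0).
have aiD : {morph ainv : x y / x + y} by exact: (binvD aD aK aKV).
have [h1 [Hh1 ch1]] := core hM nB0 cB0' aD aK aKV ca cl1 S10 S1B S1a S1i c1.
have [h2 [Hh2 ch2]] := core hM nB0 cB0' aiD aKV aK cai cl2 S20 S2B S2i S2a c2.
have fD : {morph f : x y / x + y} by move=> x y; rewrite /f aD opprD addrACA.
have fB : forall x y, f (x - y) = f x - f y by exact: (bB fD).
have uniq12 : forall u1 u2 v1 v2, M1 u1 -> M1 v1 -> M2 u2 -> M2 v2 ->
    u1 + u2 = v1 + v2 -> u1 = v1 /\ u2 = v2.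
  move=> u1 u2 v1 v2 U1 V1 U2 V2 E.
  have d0 : u1 - v1 = 0.
    apply: inter; split; first exact: S1B.
    have -> : u1 - v1 = v2 - u2.
      by rewrite -[u1](addrK u2) E addrAC [v1 + v2]addrC addrK.
    exact: S2B.
  move/eqP: d0; rewrite subr_eq0 => /eqP d0; split => //.
  by move: E; rewrite d0 => /addrI.
have S1D : forall x y, M1 x -> M1 y -> M1 (x + y) by exact: (SD S10 S1B).
have S2D : forall x y, M2 x -> M2 y -> M2 (x + y) by exact: (SD S20 S2B).
have pD : forall x y, p1 (x + y) = p1 x + p1 y /\ p2 (x + y) = p2 x + p2 y.
  move=> x y.
  have [A1 [A2 A3]] := Hp (x + y); have [B1 [B2 B3]] := Hp x; have [C1 [C2 C3]] := Hp y.
  apply: uniq12 => //; [exact: S1D | exact: S2D |].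
  by rewrite A3 addrACA B3 C3.
split => //; split; first by move=> x; rewrite /f (bB aD).
split; first by move=> x; apply: contB; [exact: ca | exact: cvg_id].
pose g := fun x => h1 (p1 x) - h2 (ainv (p2 x)).
have fg : cancel g f.
  move=> x; rewrite /g fB.
  have [_ E1] := Hh1 _ (proj1 (Hp x)).
  have [_ E2] := Hh2 _ (S2i _ (proj1 (proj2 (Hp x)))).
  have -> : f (h2 (ainv (p2 x))) = - p2 x.
    set H := h2 (ainv (p2 x)).
    have : a (ainv H - H) = p2 x by rewrite E2 aKV.
    by rewrite (bB aD) aKV /f => <-; rewrite opprB.
  by rewrite /f in E1 *; rewrite E1 opprK (proj2 (proj2 (Hp x))).
have finj : forall x, f x = 0 -> x = 0.
  move=> x /eqP; rewrite subr_eq0 => /eqP ax.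
  have [P1 [P2 P3]] := Hp x.
  have [E1 E2] : a (p1 x) = p1 x /\ a (p2 x) = p2 x.
    by apply: uniq12 => //; [exact: S1a | exact: S2a | rewrite -aD P3 ax].
  have z1 : p1 x = 0 by exact: (fix0 hM c1).
  have z2 : p2 x = 0.
    apply: (fix0 hM c2) => //.
    by rewrite -{1}E2 aK.
  by rewrite -P3 z1 z2 addr0.
have gf : cancel f g.
  move=> x; apply/eqP; rewrite -subr_eq0; apply/eqP; apply: finj.
  by rewrite fB fg subrr.
exists g; split; first exact: gf.
split; first exact: fg.
have p1D : {morph p1 : x y / x + y} by move=> x y; case: (pD x y).
have p2D : {morph p2 : x y / x + y} by move=> x y; case: (pD x y).
have G1 : continuous (fun x => h1 (p1 x)).
  apply: (Gcont p1D cp1 (fun x => proj1 (Hp x))) => //.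
  exact: (hD aD S10 S1B (@fix0 _ hM _ _ c1) Hh1).
have qD : {morph (fun x => ainv (p2 x)) : x y / x + y}.
  by move=> x y; rewrite p2D aiD.
have cq : continuous (fun x => ainv (p2 x)).
  by move=> x; apply: (@continuous_comp _ _ _ p2 ainv); [exact: cp2 | exact: cai].
have G2 : continuous (fun x => h2 (ainv (p2 x))).
  apply: (Gcont qD cq (fun x => S2i _ (proj1 (proj2 (Hp x))))) => //.
  exact: (hD aiD S20 S2B (@fix0 _ hM _ _ c2) Hh2).
by move=> x; apply: contB; [exact: G1 | exact: G2].
Qed.
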